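(* Let $0<\lambda<1$ and $0<p<1$. Consider the functions \[ f(z)=\frac{z}{1-\frac{z}{p}+\lambda z\int_z^p\omega(t)\,dt}, \] where $\omega$ ranges over all functions analytic in $\mathbb{D}=\{z:|z|<1\}$ with $|\omega(z)|\le1$ on $\mathbb{D}$; these are exactly the functions in $\mathcal{U}_m(\lambda)$ with a simple pole at $p$. Write $f(z)=z+\sum_{k\ge2}a_kz^k$ for $|z|<p$. Then the region of variability of the coefficient $a_2$ is the closed disk \[ \left\{\frac1p-\lambda p u:\ u\in\overline{\mathbb{D}}\right\}, \] and \[ \frac1p-\lambda p\le |a_2|\le \frac1p+\lambda p. \]
   Context: For $\lambda\in(0,1)$ and $p\in(0,1)$, $\mathcal{U}_m(\lambda)$ denotes the family of functions $f$ meromorphic in $\mathbb{D}$ with a pole at $z=p$, having a Taylor expansion $f(z)=z+\sum_{k=2}^\infty a_k z^k$ for $|z|<p$, and satisfying $\left|\frac{z}{f(z)}-z\left(\frac{z}{f(z)}\right)'-1\right|<\lambda$ for every $z\in\mathbb{D}$. The integral is along any path in $\mathbb{D}$ from $z$ to $p$. *)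

(* Defs.v *)
From Stdlib Require Import Reals.
From Coquelicot Require Import Coquelicot.
Open Scope R_scope.

Definition in_unit_disk (z : C) : Prop := Cmod z < 1.

Definition holomorphic_on_unit_disk (w : C -> C) : Prop :=
  forall z : C, in_unit_disk z -> @ex_derive C_AbsRing C_NormedModule w z.

Definition admissible_omega (w : C -> C) : Prop :=
  holomorphic_on_unit_disk w /\ (forall z : C, in_unit_disk z -> Cmod (w z) <= 1).

(* Complex line integral of w along the straight segment from a to b
   (a path in D when a, b are in D, since D is convex):
   int_a^b w(t) dt = int_0^1 w(a + s (b - a)) (b - a) ds. *)
Definition seg_integral (w : C -> C) (a b : C) : C :=
  @RInt C_R_CompleteNormedModule
    (fun s : R => Cmult (w (Cplus a (Cmult (RtoC s) (Cminus b a)))) (Cminus b a)) 0 1.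

Definition f_omega (lam p : R) (w : C -> C) (z : C) : C :=
  Cdiv z (Cplus (Cminus (RtoC 1) (Cdiv z (RtoC p)))
                (Cmult (Cmult (RtoC lam) z) (seg_integral w z (RtoC p)))).

Definition taylor_coeffs_in (lam p : R) (w : C -> C) (a : nat -> C) : Prop :=
  forall z : C, Cmod z < p ->
    @is_pseries C_AbsRing C_NormedModule a z (f_omega lam p w z).

(* Main.v *)
Require Import Defs.
From Stdlib Require Import Reals Lra Lia.
From Coquelicot Require Import Coquelicot.
Open Scope R_scope.

Lemma pow_n_RtoC (x : R) k : @pow_n C_Ring (RtoC x) k = RtoC (x ^ k).
Proof.
  induction k as [|k IH]; simpl. reflexivity.
  rewrite IH. unfold mult; simpl. rewrite RtoC_mult. reflexivity.
Qed.

Lemma sum_n_fst (u : nat -> C) n :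
  fst (@sum_n C_AbelianMonoid u n) = @sum_n R_AbelianMonoid (fun k => fst (u k)) n.
Proof.
  induction n as [|n IH].
  - rewrite !sum_O. reflexivity.
  - rewrite !sum_Sn. rewrite <- IH. reflexivity.
Qed.

Lemma sum_n_snd (u : nat -> C) n :
  snd (@sum_n C_AbelianMonoid u n) = @sum_n R_AbelianMonoid (fun k => snd (u k)) n.
Proof.
  induction n as [|n IH].
  - rewrite !sum_O. reflexivity.
  - rewrite !sum_Sn. rewrite <- IH. reflexivity.
Qed.

Lemma transfer_fst (a : nat -> C) (x : R) (l : C) :
  @is_pseries C_AbsRing C_NormedModule a (RtoC x) l ->
  is_pseries (fun k => fst (a k)) x (fst l).
Proof.
  unfold is_pseries, is_series. intro H.
  apply filterlim_locally. intro eps.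
  pose proof (proj1 (filterlim_locally _ _) H eps) as H0; clear H; rename H0 into H.
  destruct H as [N HN]. exists N. intros n Hn.
  specialize (HN n Hn). destruct HN as [H1 H2].
  rewrite sum_n_fst in H1. erewrite sum_n_ext; [exact H1|]. intro k. simpl.
  rewrite pow_n_RtoC, pow_n_pow. unfold scal; simpl. unfold mult; simpl. ring.
Qed.

Lemma transfer_snd (a : nat -> C) (x : R) (l : C) :
  @is_pseries C_AbsRing C_NormedModule a (RtoC x) l ->
  is_pseries (fun k => snd (a k)) x (snd l).
Proof.
  unfold is_pseries, is_series. intro H.
  apply filterlim_locally. intro eps.
  pose proof (proj1 (filterlim_locally _ _) H eps) as H0; clear H; rename H0 into H.
  destruct H as [N HN]. exists N. intros n Hn.
  specialize (HN n Hn). destruct HN as [H1 H2].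
  rewrite sum_n_snd in H2. erewrite sum_n_ext; [exact H2|]. intro k. simpl.
  rewrite pow_n_RtoC, pow_n_pow. unfold scal; simpl. unfold mult; simpl. ring.
Qed.

Lemma radius_ge (b : nat -> R) (r : R) :
  (forall x, 0 <= x < r -> ex_pseries b x) ->
  forall y, Rabs y < r -> Rbar_lt (Rabs y) (CV_radius b).
Proof.
  intros H y Hy.
  set (x := (Rabs y + r) / 2).
  assert (Hx : 0 <= x < r) by (unfold x; pose proof (Rabs_pos y); lra).
  assert (Hle : Rbar_le (Rabs x) (CV_radius b)).
  { apply Rbar_not_lt_le. intro Hlt. apply (CV_disk_outside b x Hlt).
    pose proof (ex_series_lim_0 _ (H x Hx)) as L.
    eapply is_lim_seq_ext; [|exact L]. intro n. simpl.
    rewrite pow_n_pow. unfold scal; simpl. unfold mult; simpl. ring. }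
  rewrite (Rabs_pos_eq x) in Hle by lra.
  destruct (CV_radius b) as [c| |]; simpl in *; try easy. unfold x in Hle. lra.
Qed.

Lemma real_tail (b : nat -> R) (g : R -> R) (r : R) : 0 < r ->
  (forall x, 0 <= x < r -> is_pseries b x (g x)) ->
  exists M d, 0 < d /\ forall x, 0 < x < d ->
    Rabs (g x - (b 0%nat + b 1%nat * x + b 2%nat * x ^ 2)) <= M * x ^ 3.
Proof.
  intros Hr H.
  assert (Hrad : forall y, Rabs y < r -> Rbar_lt (Rabs y) (CV_radius b)).
  { apply radius_ge. intros x Hx. eexists. apply H; exact Hx. }
  assert (E3 : CV_radius (PS_decr_n b 3) = CV_radius b).
  { rewrite <- (CV_radius_decr_1 b), <- (CV_radius_decr_1 (PS_decr_1 b)),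
      <- (CV_radius_decr_1 (PS_decr_1 (PS_decr_1 b))).
    apply CV_radius_ext. intro n. reflexivity. }
  set (h := PSeries (PS_decr_n b 3)).
  assert (Hc : continuity_pt h 0).
  { apply PSeries_continuity. rewrite E3. apply Hrad. rewrite Rabs_R0; lra. }
  pose proof (proj1 (continuity_pt_locally h 0) Hc) as Hc0; clear Hc; rename Hc0 into Hc.
  destruct (Hc (mkposreal 1 Rlt_0_1)) as [d Hd].
  exists (Rabs (h 0) + 1), (Rmin d r). split.
  { apply Rmin_pos; [apply cond_pos|exact Hr]. }
  intros x Hx.
  assert (Hxd : x < d) by (pose proof (Rmin_l d r); lra).
  assert (Hxr : x < r) by (pose proof (Rmin_r d r); lra).
  assert (Hb : ball 0 d x).
  { change (Rabs (x - 0) < d). rewrite Rminus_0_r, Rabs_pos_eq; lra. }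
  specialize (Hd x Hb). simpl in Hd.
  assert (Hg : g x = PSeries b x).
  { symmetry. apply is_pseries_unique. apply H. lra. }
  rewrite Hg. rewrite (PSeries_decr_n b 2 x).
  2:{ apply CV_radius_inside. apply Hrad. rewrite Rabs_pos_eq; lra. }
  fold h. simpl sum_f_R0.
  replace (b 0%nat * 1 + b 1%nat * (x * 1) + b 2%nat * (x * (x * 1)) + x ^ 3 * h x -
     (b 0%nat + b 1%nat * x + b 2%nat * x ^ 2)) with (x ^ 3 * h x) by ring.
  rewrite Rabs_mult, Rabs_pos_eq by (apply pow_le; lra).
  rewrite Rmult_comm. apply Rmult_le_compat_r. apply pow_le; lra.
  assert (Rabs (h x) - Rabs (h 0) <= Rabs (h x - h 0)) by apply Rabs_triang_inv.
  lra.
Qed.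

Lemma Cmod_le_sum (w : C) : Cmod w <= Rabs (fst w) + Rabs (snd w).
Proof.
  unfold Cmod.
  rewrite <- (sqrt_pow2 (Rabs (fst w) + Rabs (snd w))) by
    (pose proof (Rabs_pos (fst w)); pose proof (Rabs_pos (snd w)); lra).
  apply sqrt_le_1_alt.
  rewrite <- (pow2_abs (fst w)), <- (pow2_abs (snd w)).
  pose proof (Rabs_pos (fst w)); pose proof (Rabs_pos (snd w)).
  assert (0 <= Rabs (fst w) * Rabs (snd w)) by (apply Rmult_le_pos; lra).
  nra.
Qed.

Lemma complex_tail (a : nat -> C) (F : C -> C) (r : R) : 0 < r ->
  (forall z : C, Cmod z < r -> @is_pseries C_AbsRing C_NormedModule a z (F z)) ->
  exists M d, 0 < d /\ forall x, 0 < x < d ->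
    Cmod (Cminus (F (RtoC x))
           (Cplus (Cplus (a 0%nat) (Cmult (RtoC x) (a 1%nat))) (Cmult (RtoC (x ^ 2)) (a 2%nat))))
      <= M * x ^ 3.
Proof.
  intros Hr H.
  destruct (real_tail (fun k => fst (a k)) (fun x => fst (F (RtoC x))) r Hr) as [M1 [d1 [Hd1 H1]]].
  { intros x Hx. apply transfer_fst. apply H. rewrite Cmod_R, Rabs_pos_eq; lra. }
  destruct (real_tail (fun k => snd (a k)) (fun x => snd (F (RtoC x))) r Hr) as [M2 [d2 [Hd2 H2]]].
  { intros x Hx. apply transfer_snd. apply H. rewrite Cmod_R, Rabs_pos_eq; lra. }
  exists (M1 + M2), (Rmin d1 d2). split. apply Rmin_pos; assumption.
  intros x Hx.
  assert (x < d1) by (pose proof (Rmin_l d1 d2); lra).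
  assert (x < d2) by (pose proof (Rmin_r d1 d2); lra).
  specialize (H1 x ltac:(lra)). specialize (H2 x ltac:(lra)).
  eapply Rle_trans. apply Cmod_le_sum.
  replace (fst (Cminus (F (RtoC x))
           (Cplus (Cplus (a 0%nat) (Cmult (RtoC x) (a 1%nat))) (Cmult (RtoC (x ^ 2)) (a 2%nat)))))
    with (fst (F x) - (fst (a 0%nat) + fst (a 1%nat) * x + fst (a 2%nat) * x ^ 2))
    by (simpl; ring).
  replace (snd (Cminus (F (RtoC x))
           (Cplus (Cplus (a 0%nat) (Cmult (RtoC x) (a 1%nat))) (Cmult (RtoC (x ^ 2)) (a 2%nat)))))
    with (snd (F x) - (snd (a 0%nat) + snd (a 1%nat) * x + snd (a 2%nat) * x ^ 2))
    by (simpl; ring).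
  lra.
Qed.

Lemma cont_line (x c s : R) :
  @continuous R_UniformSpace (AbsRing_UniformSpace C_AbsRing)
    (fun t : R => RtoC (x + t * c)) s.
Proof.
  apply filterlim_locally. intro eps.
  assert (Hd : 0 < eps / (Rabs c + 1)).
  { apply Rdiv_lt_0_compat. apply cond_pos. pose proof (Rabs_pos c); lra. }
  exists (mkposreal _ Hd). intros t Ht.
  change (Rabs (t - s) < eps / (Rabs c + 1)) in Ht.
  change (Cmod (Cminus (RtoC (x + t * c)) (RtoC (x + s * c))) < eps).
  rewrite <- RtoC_minus, Cmod_R.
  replace (x + t * c - (x + s * c)) with ((t - s) * c) by ring.
  rewrite Rabs_mult.
  pose proof (Rabs_pos c). pose proof (Rabs_pos (t - s)). pose proof (cond_pos eps).
  apply Rmult_lt_compat_r with (r := Rabs c + 1) in Ht; [|lra].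
  unfold Rdiv in Ht. rewrite Rmult_assoc, Rinv_l, Rmult_1_r in Ht by lra.
  nra.
Qed.

Lemma norm_CR (c : C) : @norm R_AbsRing C_R_NormedModule c = Cmod c.
Proof.
  unfold norm. simpl. unfold prod_norm, Cmod. simpl.
  change (@norm R_AbsRing R_NormedModule (fst c)) with (Rabs (fst c)).
  change (@norm R_AbsRing R_NormedModule (snd c)) with (Rabs (snd c)).
  f_equal. rewrite <- !Rmult_assoc, !Rmult_1_r, <- !Rabs_mult, !Rabs_pos_eq by (apply Rle_0_sqr). reflexivity.
Qed.

Lemma seg_bound (w : C -> C) (x p : R) : admissible_omega w ->
  0 <= x <= p -> p < 1 ->
  Cmod (seg_integral w (RtoC x) (RtoC p)) <= p - x.
Proof.
  intros [Hhol Hbd] Hx Hp.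
  unfold seg_integral.
  set (g := fun s : R => w (RtoC (x + s * (p - x)))).
  assert (Hpt : forall s, 0 <= s <= 1 -> in_unit_disk (RtoC (x + s * (p - x)))).
  { intros s Hs. unfold in_unit_disk. rewrite Cmod_R. rewrite Rabs_pos_eq by nra. nra. }
  assert (Heq : forall s, Cmult (w (Cplus (RtoC x) (Cmult (RtoC s) (Cminus (RtoC p) (RtoC x)))))
                   (Cminus (RtoC p) (RtoC x)) = @scal R_AbsRing C_R_NormedModule (p - x) (g s)).
  { intro s. unfold g.
    replace (Cplus (RtoC x) (Cmult (RtoC s) (Cminus (RtoC p) (RtoC x)))) with (RtoC (x + s * (p - x)))
      by (apply injective_projections; simpl; ring).
    apply injective_projections; simpl; unfold scal; simpl; unfold mult; simpl; ring. }
  assert (Hex : @ex_RInt C_R_CompleteNormedModule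
                  (fun s => @scal R_AbsRing C_R_NormedModule (p - x) (g s)) 0 1).
  { apply ex_RInt_continuous. intros s Hs.
    rewrite Rmin_left in Hs by lra. rewrite Rmax_right in Hs by lra.
    apply (continuous_scal_r (V := C_R_NormedModule)).
    unfold g.
    apply (@continuous_comp R_UniformSpace (AbsRing_UniformSpace C_AbsRing) (NormedModule.UniformSpace _ C_R_NormedModule) (fun t : R => RtoC (x + t * (p - x))) w).
    apply cont_line.
    exact (@ex_derive_continuous C_AbsRing C_NormedModule w _ (Hhol _ (Hpt s Hs))). }
  erewrite RInt_ext.
  2:{ intros s _. apply Heq. }
  pose proof (RInt_correct _ _ _ Hex) as Hc.
  assert (Hb : forall s, 0 <= s <= 1 ->
     @norm R_AbsRing C_R_NormedModule (@scal R_AbsRing C_R_NormedModule (p - x) (g s)) <= p - x).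
  { intros s Hs. rewrite norm_CR. unfold g.
    replace (@scal R_AbsRing C_R_NormedModule (p - x) (w (RtoC (x + s * (p - x)))))
      with (Cmult (w (RtoC (x + s * (p - x)))) (RtoC (p - x)))
      by (apply injective_projections; simpl; unfold scal; simpl; unfold mult; simpl; ring).
    rewrite Cmod_mult, Cmod_R, Rabs_pos_eq by lra.
    pose proof (Hbd _ (Hpt s Hs)). pose proof (Cmod_ge_0 (w (RtoC (x + s * (p - x))))).
    nra. }
  pose proof (norm_RInt_le_const (V := C_R_NormedModule) _ 0 1 _ (p - x) ltac:(lra) Hb Hc) as B.
  rewrite <- norm_CR. eapply Rle_trans; [exact B | lra].
Qed.

Lemma Cmod_pow_n (q : C) n : Cmod (@pow_n C_Ring q n) = Cmod q ^ n.
Proof.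
  induction n as [|n IH]; simpl. apply Cmod_1.
  unfold mult; simpl. rewrite Cmod_mult, IH. reflexivity.
Qed.


Lemma one_minus_nz (q : C) : Cmod q < 1 -> Cminus (RtoC 1) q <> RtoC 0.
Proof.
  intros Hq E. assert (Hq1 : q = RtoC 1).
  { replace q with (Cminus (RtoC 1) (Cminus (RtoC 1) q)) by ring. rewrite E. ring. }
  rewrite Hq1, Cmod_1 in Hq. lra.
Qed.

Lemma sum_geom (q : C) n :
  Cmult (@sum_n C_AbelianMonoid (fun k => @pow_n C_Ring q k) n) (Cminus (RtoC 1) q)
  = Cminus (RtoC 1) (@pow_n C_Ring q (S n)).
Proof.
  induction n as [|n IH].
  - rewrite sum_O. simpl. unfold mult, one; simpl. ring.
  - rewrite sum_Sn. change (plus ?a ?b) with (Cplus a b).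
    rewrite Cmult_plus_distr_r, IH. simpl. unfold mult; simpl. ring.
Qed.

Lemma geom_alg (q s P : C) : Cminus (RtoC 1) q <> RtoC 0 ->
  Cmult s (Cminus (RtoC 1) q) = Cminus (RtoC 1) P ->
  Cdiv (Copp P) (Cminus (RtoC 1) q) = Cminus s (Cinv (Cminus (RtoC 1) q)).
Proof.
  intros Hnz H.
  assert (HP : P = Cminus (RtoC 1) (Cmult s (Cminus (RtoC 1) q))) by (rewrite H; ring).
  rewrite HP. field. exact Hnz.
Qed.

Lemma geom_C (q : C) : Cmod q < 1 ->
  @is_series C_AbsRing C_NormedModule (fun n => @pow_n C_Ring q n) (Cinv (Cminus (RtoC 1) q)).
Proof.
  intro Hq. pose proof (one_minus_nz q Hq) as Hnz.
  assert (Hm : 0 < Cmod (Cminus (RtoC 1) q)) by (apply Cmod_gt_0; exact Hnz).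
  unfold is_series. apply filterlim_locally. intro eps.
  assert (Hy : 0 < eps * Cmod (Cminus (RtoC 1) q)) by (apply Rmult_lt_0_compat; [apply cond_pos|exact Hm]).
  assert (Hq' : Rabs (Cmod q) < 1) by (rewrite Rabs_pos_eq by apply Cmod_ge_0; exact Hq).
  destruct (pow_lt_1_zero (Cmod q) Hq' _ Hy) as [N HN].
  exists N. intros n Hn.
  apply (norm_compat1 (V := C_NormedModule)).
  change (Cmod (Cminus (@sum_n C_AbelianMonoid (fun k => @pow_n C_Ring q k) n) (Cinv (Cminus (RtoC 1) q))) < eps).
  replace (Cminus (@sum_n C_AbelianMonoid (fun k => @pow_n C_Ring q k) n) (Cinv (Cminus (RtoC 1) q)))
    with (Cdiv (Copp (@pow_n C_Ring q (S n))) (Cminus (RtoC 1) q)).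
  2:{ apply geom_alg. exact Hnz. apply sum_geom. }
  rewrite Cmod_div by exact Hnz. rewrite Cmod_opp, Cmod_pow_n.
  specialize (HN (S n) ltac:(lia)).
  rewrite Rabs_pos_eq in HN by (apply pow_le; apply Cmod_ge_0).
  apply (Rmult_lt_reg_r (Cmod (Cminus (RtoC 1) q))). exact Hm.
  unfold Rdiv. rewrite Rmult_assoc, Rinv_l, Rmult_1_r by lra. exact HN.
Qed.

Lemma pow_n_Cmult (x y : C) k :
  @pow_n C_Ring (Cmult x y) k = Cmult (@pow_n C_Ring x k) (@pow_n C_Ring y k).
Proof.
  induction k as [|k IH]; simpl.
  - unfold one; simpl. ring.
  - unfold mult; simpl. rewrite IH. ring.
Qed.

Lemma seg_const (u z : C) (p : R) :
  seg_integral (fun _ => u) z (RtoC p) = Cmult u (Cminus (RtoC p) z).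
Proof.
  unfold seg_integral. rewrite RInt_const.
  apply injective_projections; simpl; unfold scal; simpl; unfold mult; simpl; ring.
Qed.

Lemma alg1 (l p : R) (u z al be : C) :
  RtoC p <> RtoC 0 ->
  al = Cinv (RtoC p) -> be = Copp (Cmult (Cmult (RtoC l) (RtoC p)) u) ->
  Cminus al be <> RtoC 0 ->
  Cminus (RtoC 1) (Cmult al z) <> RtoC 0 -> Cminus (RtoC 1) (Cmult be z) <> RtoC 0 ->
  Cdiv z (Cplus (Cminus (RtoC 1) (Cdiv z (RtoC p)))
                (Cmult (Cmult (RtoC l) z) (Cmult u (Cminus (RtoC p) z))))
  = Cmult (Cinv (Cminus al be))
      (Cminus (Cinv (Cminus (RtoC 1) (Cmult al z))) (Cinv (Cminus (RtoC 1) (Cmult be z)))).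
Proof.
  intros Hp Hal Hbe H1 H2 H3.
  assert (ED : Cplus (Cminus (RtoC 1) (Cdiv z (RtoC p)))
                (Cmult (Cmult (RtoC l) z) (Cmult u (Cminus (RtoC p) z)))
              = Cmult (Cminus (RtoC 1) (Cmult al z)) (Cminus (RtoC 1) (Cmult be z))).
  { rewrite Hal, Hbe. field. exact Hp. }
  rewrite ED.
  field. repeat split; assumption.
Qed.

Lemma alg2 (c A B Z : C) :
  Cmult c (Cplus (Cmult A Z) (Copp (Cmult B Z))) = Cmult Z (Cmult c (Cminus A B)).
Proof. ring. Qed.

Lemma alg3 (al be : C) : Cminus al be <> RtoC 0 ->
  Cmult (Cinv (Cminus al be)) (Cminus (Cmult al (Cmult al (RtoC 1))) (Cmult be (Cmult be (RtoC 1))))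
  = Cplus al be.
Proof. intro H. field. exact H. Qed.

Lemma exist_dir (lam p : R) (u : C) : 0 < lam < 1 -> 0 < p < 1 -> Cmod u <= 1 ->
  exists a : nat -> C, taylor_coeffs_in lam p (fun _ => u) a /\
    a 2%nat = Cminus (RtoC (1 / p)) (Cmult (RtoC (lam * p)) u).
Proof.
  intros Hl Hp Hu.
  set (al := Cinv (RtoC p)).
  set (be := Copp (Cmult (Cmult (RtoC lam) (RtoC p)) u)).
  assert (Hp0 : RtoC p <> RtoC 0).
  { intro E. apply RtoC_inj in E. lra. }
  assert (Hmal : Cmod al = / p).
  { unfold al. rewrite Cmod_inv by exact Hp0. rewrite Cmod_R, Rabs_pos_eq by lra. reflexivity. }
  assert (Hmbe : Cmod be = lam * p * Cmod u).
  { unfold be. rewrite Cmod_opp, !Cmod_mult, !Cmod_R, !Rabs_pos_eq by lra. reflexivity. }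
  assert (Hinvp : 1 < / p).
  { rewrite <- Rinv_1. apply Rinv_lt_contravar; lra. }
  assert (Hlp : lam * p < 1) by nra.
  pose proof (Cmod_ge_0 u).
  assert (Hab : Cminus al be <> RtoC 0).
  { intro E. assert (al = be) by (replace al with (Cplus (Cminus al be) be) by ring; rewrite E; ring).
    assert (Hc : Cmod al = Cmod be) by congruence. rewrite Hmal, Hmbe in Hc.
    assert (lam * p * Cmod u <= lam * p * 1) by (apply Rmult_le_compat_l; nra). lra. }
  exists (fun n => Cmult (Cinv (Cminus al be))
                    (Cminus (@pow_n C_Ring al n) (@pow_n C_Ring be n))).
  split.
  - intros z Hz.
    pose proof (Cmod_ge_0 z).
    assert (Ha1 : Cmod (Cmult al z) < 1).
    { rewrite Cmod_mult, Hmal. apply (Rmult_lt_reg_l p); [lra|].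
      rewrite <- Rmult_assoc, Rinv_r by lra. lra. }
    assert (Hb1 : Cmod (Cmult be z) < 1).
    { rewrite Cmod_mult, Hmbe.
      assert (lam * p * Cmod u <= lam * p * 1) by (apply Rmult_le_compat_l; nra).
      assert (0 <= lam * p * Cmod u) by (apply Rmult_le_pos; nra).
      nra. }
    pose proof (geom_C _ Ha1) as Ga. pose proof (geom_C _ Hb1) as Gb.
    pose proof (is_series_minus _ _ _ _ Ga Gb) as G.
    pose proof (is_series_scal (Cinv (Cminus al be)) _ _ G) as G2.
    unfold is_pseries.
    replace (f_omega lam p (fun _ : C => u) z) with
      (@scal C_AbsRing C_NormedModule (Cinv (Cminus al be))
        (@plus C_NormedModule (Cinv (Cminus (RtoC 1) (Cmult al z)))
              (@opp C_NormedModule (Cinv (Cminus (RtoC 1) (Cmult be z)))))).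
    + eapply is_series_ext; [|exact G2].
      intro n. simpl. change (@scal C_AbsRing C_NormedModule ?a ?b) with (Cmult a b).
      change (@plus C_NormedModule ?a ?b) with (Cplus a b).
      change (@opp C_NormedModule ?a) with (Copp a).
      rewrite !pow_n_Cmult. apply alg2.
    + unfold f_omega. rewrite seg_const.
      rewrite (alg1 lam p u z al be); try reflexivity; try assumption.
      * apply one_minus_nz; exact Ha1.
      * apply one_minus_nz; exact Hb1.
  - simpl. unfold mult, one; simpl.
    rewrite (alg3 al be Hab).
    unfold be, al. rewrite RtoC_mult. unfold Rdiv. rewrite Rmult_1_l, RtoC_inv by lra.
    ring.
Qed.

Lemma le_of_small (m c C0 d : R) : 0 < d ->
  (forall x, 0 < x < d -> m <= c + C0 * x) -> m <= c.
Proof.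
  intros Hd H. destruct (Rle_dec m c) as [|Hn]; [assumption|]. exfalso.
  apply Rnot_le_lt in Hn.
  set (k := Rabs C0 + 1).
  assert (Hk : 0 < k) by (unfold k; pose proof (Rabs_pos C0); lra).
  set (x := Rmin (d / 2) ((m - c) / (2 * k))).
  assert (Hx1 : 0 < x).
  { unfold x. apply Rmin_pos. lra. apply Rdiv_lt_0_compat; lra. }
  assert (Hx2 : x <= d / 2) by apply Rmin_l.
  assert (Hx3 : x <= (m - c) / (2 * k)) by apply Rmin_r.
  specialize (H x ltac:(lra)).
  assert (C0 * x <= k * x).
  { apply Rmult_le_compat_r; [lra|]. unfold k. pose proof (Rle_abs C0). lra. }
  assert (k * x <= (m - c) / 2).
  { apply Rmult_le_compat_l with (r := k) in Hx3; [|lra].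
    replace (k * ((m - c) / (2 * k))) with ((m - c) / 2) in Hx3 by (field; lra). exact Hx3. }
  lra.
Qed.

Lemma Cmod_RtoC_mult (x : R) (b : C) : Cmod (Cmult (RtoC x) b) = Rabs x * Cmod b.
Proof. rewrite Cmod_mult, Cmod_R. reflexivity. Qed.

Lemma Cmod_sub_le (u v : C) : Cmod (Cminus u v) <= Cmod u + Cmod v.
Proof.
  unfold Cminus. eapply Rle_trans. apply Cmod_triangle. rewrite Cmod_opp. lra.
Qed.

Lemma poly_small (b0 b1 : C) (g : R -> C) (c C0 d : R) : 0 < d ->
  (forall x, 0 < x < d -> Cmod (g x) <= c) ->
  (forall x, 0 < x < d ->
     Cmod (Cplus (Cplus b0 (Cmult (RtoC x) b1)) (Cmult (RtoC (x ^ 2)) (g x))) <= C0 * x ^ 3) ->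
  b0 = RtoC 0 /\ b1 = RtoC 0 /\ forall x, 0 < x < d -> Cmod (g x) <= C0 * x.
Proof.
  intros Hd Hg H.
  set (d' := Rmin d 1).
  assert (Hd' : 0 < d') by (apply Rmin_pos; lra).
  assert (Hd1 : d' <= d) by apply Rmin_l.
  assert (Hd2 : d' <= 1) by apply Rmin_r.
  assert (Hc : 0 <= c).
  { pose proof (Hg (d / 2) ltac:(lra)). pose proof (Cmod_ge_0 (g (d / 2))). lra. }
  assert (HC0 : 0 <= C0).
  { pose proof (H (d / 2) ltac:(lra)) as X.
    pose proof (Cmod_ge_0 (Cplus (Cplus b0 (Cmult (RtoC (d / 2)) b1)) (Cmult (RtoC ((d / 2) ^ 2)) (g (d / 2))))).
    assert (0 < (d / 2) ^ 3) by (apply pow_lt; lra).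
    destruct (Rle_dec 0 C0) as [|Hn]; [assumption|]. nra. }
  assert (Hb0 : b0 = RtoC 0).
  { apply Cmod_eq_0. apply Rle_antisym; [|apply Cmod_ge_0].
    apply (le_of_small _ 0 (C0 + Cmod b1 + c) d' Hd').
    intros x Hx.
    set (S := Cplus (Cplus b0 (Cmult (RtoC x) b1)) (Cmult (RtoC (x ^ 2)) (g x))).
    replace b0 with (Cminus (Cminus S (Cmult (RtoC x) b1)) (Cmult (RtoC (x ^ 2)) (g x)))
      by (unfold S; ring).
    eapply Rle_trans. apply Cmod_sub_le.
    eapply Rle_trans. apply Rplus_le_compat_r. apply Cmod_sub_le.
    rewrite !Cmod_RtoC_mult, !Rabs_pos_eq by (try apply pow_le; lra).
    pose proof (H x ltac:(lra)). fold S in H0. pose proof (Hg x ltac:(lra)).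
    pose proof (Cmod_ge_0 b1). pose proof (Cmod_ge_0 (g x)).
    assert (x ^ 3 <= x) by (simpl; nra). assert (x ^ 2 <= x) by (simpl; nra).
    assert (C0 * x ^ 3 <= C0 * x) by (apply Rmult_le_compat_l; lra).
    assert (x ^ 2 * Cmod (g x) <= x * c).
    { apply Rmult_le_compat; try lra. apply pow_le; lra. }
    nra. }
  assert (Hb1 : b1 = RtoC 0).
  { apply Cmod_eq_0. apply Rle_antisym; [|apply Cmod_ge_0].
    apply (le_of_small _ 0 (C0 + c) d' Hd').
    intros x Hx.
    set (S := Cplus (Cplus b0 (Cmult (RtoC x) b1)) (Cmult (RtoC (x ^ 2)) (g x))).
    assert (E : Cmult (RtoC x) b1 = Cminus S (Cmult (RtoC (x ^ 2)) (g x)))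
      by (unfold S; rewrite Hb0; ring).
    pose proof (Cmod_sub_le S (Cmult (RtoC (x ^ 2)) (g x))) as T.
    rewrite <- E in T. rewrite !Cmod_RtoC_mult, !Rabs_pos_eq in T by (try apply pow_le; lra).
    pose proof (H x ltac:(lra)). fold S in H0. pose proof (Hg x ltac:(lra)).
    pose proof (Cmod_ge_0 b1). pose proof (Cmod_ge_0 (g x)).
    assert (x ^ 2 * Cmod (g x) <= x ^ 2 * c).
    { apply Rmult_le_compat_l; [apply pow_le; lra| lra]. }
    assert (x * Cmod b1 <= x * (C0 * x ^ 2 + c * x)) by (simpl in *; nra).
    assert (Cmod b1 <= C0 * x ^ 2 + c * x) by (apply (Rmult_le_reg_l x); lra).
    assert (C0 * x ^ 2 <= C0 * x) by (apply Rmult_le_compat_l; simpl; nra).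
    lra. }
  split; [exact Hb0|]. split; [exact Hb1|].
  intros x Hx.
  pose proof (H x Hx) as X. rewrite Hb0, Hb1 in X.
  replace (Cplus (Cplus (RtoC 0) (Cmult (RtoC x) (RtoC 0))) (Cmult (RtoC (x ^ 2)) (g x)))
    with (Cmult (RtoC (x ^ 2)) (g x)) in X by ring.
  rewrite Cmod_RtoC_mult, Rabs_pos_eq in X by (apply pow_le; lra).
  assert (0 < x ^ 2) by (apply pow_lt; lra).
  apply (Rmult_le_reg_l (x ^ 2)). exact H0.
  replace (x ^ 2 * (C0 * x)) with (C0 * x ^ 3) by ring. exact X.
Qed.

Lemma RtoC_pow2 (x : R) : RtoC (x ^ 2) = Cmult (RtoC x) (RtoC x).
Proof. apply injective_projections; simpl; ring. Qed.
Lemma RtoC_pow3 (x : R) : RtoC (x ^ 3) = Cmult (RtoC x) (Cmult (RtoC x) (RtoC x)).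
Proof. apply injective_projections; simpl; ring. Qed.

Lemma forward (lam p : R) (w : C -> C) (a : nat -> C) : 0 < lam < 1 -> 0 < p < 1 ->
  admissible_omega w -> taylor_coeffs_in lam p w a ->
  Cmod (Cminus (a 2%nat) (RtoC (1 / p))) <= lam * p.
Proof.
  intros Hl Hp Hw Ht.
  destruct (complex_tail a (f_omega lam p w) p ltac:(lra) Ht) as [M [dE [HdE HE]]].
  assert (Hip : 0 < / p) by (apply Rinv_0_lt_compat; lra).
  set (K := / p + lam * p).
  assert (HK : 0 < K) by (unfold K; apply Rplus_lt_0_compat; [lra|apply Rmult_lt_0_compat; lra]).
  set (d := Rmin (Rmin dE p) (/ (2 * K))).
  assert (Hd : 0 < d).
  { unfold d. apply Rmin_pos. apply Rmin_pos; lra. apply Rinv_0_lt_compat; lra. }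
  assert (Hd1 : d <= dE) by (unfold d; eapply Rle_trans; [apply Rmin_l|apply Rmin_l]).
  assert (Hd2 : d <= p) by (unfold d; eapply Rle_trans; [apply Rmin_l|apply Rmin_r]).
  assert (Hd3 : d <= / (2 * K)) by (unfold d; apply Rmin_r).
  pose (I := fun x : R => seg_integral w (RtoC x) (RtoC p)).
  pose (d1 := fun x : R => Cplus (Copp (RtoC (/ p))) (Cmult (RtoC lam) (I x))).
  assert (HI : forall x, 0 < x < d -> Cmod (I x) <= p - x).
  { intros x Hx. unfold I. apply (seg_bound w x p Hw); lra. }
  assert (Hd1b : forall x, 0 < x < d -> Cmod (d1 x) <= K).
  { intros x Hx. unfold d1. eapply Rle_trans. apply Cmod_triangle.
    rewrite Cmod_opp, Cmod_R, Rabs_pos_eq by lra. rewrite Cmod_RtoC_mult, Rabs_pos_eq by lra.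
    pose proof (HI x Hx).
    assert (lam * Cmod (I x) <= lam * p) by (apply Rmult_le_compat_l; lra). unfold K. lra. }
  assert (HxK : forall x, 0 < x < d -> x * K <= / 2).
  { intros x Hx. assert (x <= / (2 * K)) by lra.
    apply Rmult_le_compat_r with (r := K) in H; [|lra].
    rewrite Rinv_mult, Rmult_assoc, Rinv_l, Rmult_1_r in H by lra. exact H. }
  assert (HD : forall x, 0 < x < d -> / 2 <= Cmod (Cplus (RtoC 1) (Cmult (RtoC x) (d1 x)))).
  { intros x Hx.
    pose proof (Cmod_sub_le (Cplus (RtoC 1) (Cmult (RtoC x) (d1 x))) (Cmult (RtoC x) (d1 x))) as T.
    replace (Cminus (Cplus (RtoC 1) (Cmult (RtoC x) (d1 x))) (Cmult (RtoC x) (d1 x))) with (RtoC 1) in T by ring.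
    rewrite Cmod_1, Cmod_RtoC_mult, Rabs_pos_eq in T by lra.
    pose proof (Hd1b x Hx). pose proof (HxK x Hx).
    assert (x * Cmod (d1 x) <= x * K) by (apply Rmult_le_compat_l; lra). lra. }
  assert (HDnz : forall x, 0 < x < d -> Cplus (RtoC 1) (Cmult (RtoC x) (d1 x)) <> RtoC 0).
  { intros x Hx E. pose proof (HD x Hx). rewrite E, Cmod_0 in H. lra. }
  assert (HF : forall x, 0 < x < d ->
            f_omega lam p w (RtoC x) = Cdiv (RtoC x) (Cplus (RtoC 1) (Cmult (RtoC x) (d1 x)))).
  { intros x Hx. unfold f_omega. f_equal. fold (I x). unfold d1.
    rewrite RtoC_inv by lra. field.
    intro E. apply RtoC_inj in E. lra. }
  pose (C0 := M + 2 * K ^ 2).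
  destruct (poly_small (a 0%nat) (Cminus (a 1%nat) (RtoC 1))
              (fun x => Cplus (a 2%nat) (d1 x)) (Cmod (a 2%nat) + K) C0 d Hd) as [_ [_ Hg]].
  { intros x Hx. eapply Rle_trans. apply Cmod_triangle. pose proof (Hd1b x Hx). lra. }
  { intros x Hx.
    pose (F := f_omega lam p w (RtoC x)).
    pose (Rr := Cplus (Cminus F (RtoC x)) (Cmult (RtoC (x ^ 2)) (d1 x))).
    pose (Ee := Cminus F (Cplus (Cplus (a 0%nat) (Cmult (RtoC x) (a 1%nat))) (Cmult (RtoC (x ^ 2)) (a 2%nat)))).
    replace (Cplus (Cplus (a 0%nat) (Cmult (RtoC x) (Cminus (a 1%nat) (RtoC 1))))
               (Cmult (RtoC (x ^ 2)) (Cplus (a 2%nat) (d1 x)))) with (Cminus Rr Ee)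
      by (unfold Rr, Ee; ring).
    eapply Rle_trans. apply Cmod_sub_le.
    assert (HEe : Cmod Ee <= M * x ^ 3) by (apply HE; lra).
    assert (HRr : Rr = Cdiv (Cmult (RtoC (x ^ 3)) (Cmult (d1 x) (d1 x)))
                           (Cplus (RtoC 1) (Cmult (RtoC x) (d1 x)))).
    { unfold Rr, F. rewrite (HF x Hx). rewrite RtoC_pow2, RtoC_pow3. field. apply HDnz; exact Hx. }
    assert (HRb : Cmod Rr <= 2 * K ^ 2 * x ^ 3).
    { rewrite HRr. rewrite Cmod_div by (apply HDnz; exact Hx).
      rewrite Cmod_mult, Cmod_mult, Cmod_R, Rabs_pos_eq by (apply pow_le; lra).
      pose proof (HD x Hx). pose proof (Hd1b x Hx). pose proof (Cmod_ge_0 (d1 x)).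
      revert H. generalize (Cmod (Cplus (RtoC 1) (Cmult (RtoC x) (d1 x)))). intros m H.
      assert (Hm : 0 < m) by lra.
      assert (Hx3 : 0 < x ^ 3) by (apply pow_lt; lra).
      apply (Rmult_le_reg_r m). exact Hm. unfold Rdiv. rewrite Rmult_assoc, Rinv_l, Rmult_1_r by lra.
      assert (Cmod (d1 x) * Cmod (d1 x) <= K ^ 2) by (simpl; nra).
      assert (x ^ 3 * (Cmod (d1 x) * Cmod (d1 x)) <= x ^ 3 * K ^ 2) by (apply Rmult_le_compat_l; lra).
      assert (0 <= x ^ 3 * K ^ 2) by (apply Rmult_le_pos; [lra| apply pow_le; lra]).
      nra. }
    unfold C0. lra. }
  apply (le_of_small _ (lam * p) C0 d Hd).
  intros x Hx.
  specialize (Hg x Hx). simpl in Hg.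
  replace (Cminus (a 2%nat) (RtoC (1 / p))) with
    (Cminus (Cplus (a 2%nat) (d1 x)) (Cmult (RtoC lam) (I x))).
  2:{ unfold d1. unfold Rdiv. rewrite Rmult_1_l. ring. }
  eapply Rle_trans. apply Cmod_sub_le.
  rewrite Cmod_RtoC_mult, Rabs_pos_eq by lra.
  pose proof (HI x Hx).
  assert (lam * Cmod (I x) <= lam * (p - x)) by (apply Rmult_le_compat_l; lra).
  assert (0 <= lam * x) by (apply Rmult_le_pos; lra). nra.
Qed.

Theorem corollary1 (lam p : R) (Hlam0 : 0 < lam) (Hlam1 : lam < 1)
  (Hp0 : 0 < p) (Hp1 : p < 1) :
  (* region of variability of a_2 is the closed disk {1/p - lam p u : |u| <= 1} *)
  (forall c : C,
     (exists (w : C -> C) (a : nat -> C),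
        admissible_omega w /\ taylor_coeffs_in lam p w a /\ a 2%nat = c)
     <->
     (exists u : C, Cmod u <= 1 /\
        c = Cminus (RtoC (1 / p)) (Cmult (RtoC (lam * p)) u)))
  /\
  (* bounds on |a_2| *)
  (forall (w : C -> C) (a : nat -> C),
     admissible_omega w -> taylor_coeffs_in lam p w a ->
     1 / p - lam * p <= Cmod (a 2%nat) <= 1 / p + lam * p).
Proof.
  assert (Hlp : 0 < lam * p) by (apply Rmult_lt_0_compat; lra).
  assert (Hlp0 : RtoC (lam * p) <> RtoC 0).
  { intro E. apply RtoC_inj in E. lra. }
  assert (Hip : 0 < 1 / p) by (apply Rdiv_lt_0_compat; lra).
  split.
  - intro c. split.
    + intros [w [a [Hw [Ht Ha]]]].
      pose proof (forward lam p w a ltac:(lra) ltac:(lra) Hw Ht) as Hf.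
      exists (Cmult (Cinv (RtoC (lam * p))) (Cminus (RtoC (1 / p)) (a 2%nat))). split.
      * rewrite Cmod_mult, Cmod_inv by exact Hlp0. rewrite Cmod_R, Rabs_pos_eq by lra.
        replace (Cminus (RtoC (1 / p)) (a 2%nat)) with (Copp (Cminus (a 2%nat) (RtoC (1 / p)))) by ring.
        rewrite Cmod_opp.
        apply (Rmult_le_reg_l (lam * p)). exact Hlp.
        rewrite <- Rmult_assoc, Rinv_r, Rmult_1_l, Rmult_1_r by lra. exact Hf.
      * rewrite <- Ha. field. exact Hlp0.
    + intros [u [Hu Hc]].
      destruct (exist_dir lam p u ltac:(lra) ltac:(lra) Hu) as [a [Ht Ha]].
      exists (fun _ => u), a. split; [|split].
      * split. intros z _. apply ex_derive_const. intros z _. exact Hu.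
      * exact Ht.
      * rewrite Ha, Hc. reflexivity.
  - intros w a Hw Ht.
    pose proof (forward lam p w a ltac:(lra) ltac:(lra) Hw Ht) as Hf.
    assert (E1 : Cmod (RtoC (1 / p)) = 1 / p) by (rewrite Cmod_R, Rabs_pos_eq; lra).
    pose proof (Cmod_triangle (RtoC (1 / p)) (Cminus (a 2%nat) (RtoC (1 / p)))) as T1.
    replace (Cplus (RtoC (1 / p)) (Cminus (a 2%nat) (RtoC (1 / p)))) with (a 2%nat) in T1 by ring.
    pose proof (Cmod_sub_le (a 2%nat) (Cminus (a 2%nat) (RtoC (1 / p)))) as T2.
    replace (Cminus (a 2%nat) (Cminus (a 2%nat) (RtoC (1 / p)))) with (RtoC (1 / p)) in T2 by ring.
    lra.
Qed.
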